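(* Let $f:\Gamma\to\Gamma$ be an irreducible, expanding graph map with stacks $\mathcal{K}_1,\dots,\mathcal{K}_p$ and final edges $\alpha_1,\dots,\alpha_p$. Then for every $i$ and every integer $d\ge0$, $$|f^{d+1}(\alpha_i)|\ge 1+\sum_{\mathcal{K}_j\in B_d(\mathcal{K}_i)}\omega(\mathcal{K}_j).$$
   Context: A graph $\Gamma$ is a finite 1-dimensional CW complex with a chosen orientation on each edge; $\mathcal{E}\Gamma$ is its set of edges, $\bar e$ is the reverse of $e$, $\iota,\tau$ the endpoints. An edge path is a nonempty concatenation $u=e_1\cdots e_k$ of oriented edges with $\tau(e_i)=\iota(e_{i+1})$; $|u|=k$ counts edges without cancelling backtracks; $u$ traverses $e$ if $e$ or $\bar e$ occurs in it. A graph map $f:\Gamma\to\Gamma$ assigns to vertices vertices and to each oriented edge $e$ an edge path $f(e)$ with $\iota(f(e))=f(\iota(e))$, $f(\bar e)=\overline{f(e)}$; powers are compositions, applied to paths by concatenation without tightening. $T(f)$ has $(i,j)$ entry the number of times $f(e_i)$ traverses $e_j$; $f$ is irreducible if $T(f)$ is irreducible and every vertex has valence $\ge3$; expanding if $|f^n(e)|\to\infty$ for every edge. Stacks: $e$ is mixing if $|f(e)|>1$; surplus if non-mixing and $f(e)\in\{f(u),\overline{f(u)}\}$ for some edge $u\notin\{e,\bar e\}$. Stacks are the classes of the equivalence relation on $\mathcal{E}\Gamma$ (unoriented edges) generated by $e\sim f(e)$ for $e$ non-mixing and non-surplus. Each stack has the form $\mathcal{K}=\{e,f(e),\dots,f^s(e)\}$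 with only $f^s(e)$ mixing or surplus; $f^s(e)$ is the final edge. $\alpha_i$ is the final edge of $\mathcal{K}_i$, and the weight is $\omega(\mathcal{K}_i)=|f(\alpha_i)|-1$. The stack graph $\mathcal{SG}(f)$ is the directed graph with vertices $\mathcal{K}_1,\dots,\mathcal{K}_p$ and a directed edge $[\mathcal{K}_i,\mathcal{K}_j]$ whenever $f(\alpha_i)$ contains an edge of $\mathcal{K}_j$; its length is $s([\mathcal{K}_i,\mathcal{K}_j])=\min\{s\ge1:f^s(\alpha_i)\text{ traverses }\alpha_j\}$, and a directed path $P=E_1\cdots E_k$ has length $s(P)=\sum s(E_i)$. The directed ball is $B_d(\mathcal{K}_i)=\{\mathcal{K}_j:\text{there is a directed path }P\text{ from }\mathcal{K}_i\text{ to }\mathcal{K}_j\text{ with }s(P)\le d\}$, where the empty path (length $0$) is allowed, so $B_0(\mathcal{K}_i)=\{\mathcal{K}_i\}$. *)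

(* Defs.v *)
From mathcomp Require Import all_boot.
From Stdlib Require Import ClassicalEpsilon.
Set Implicit Arguments. Unset Strict Implicit. Unset Printing Implicit Defensive.

(* An oriented edge is a pair (e, b) : E * bool; b = false is e with its
   chosen orientation, b = true is the reverse edge \bar e. *)
Record gmap (V E : finType) := GMap {
  src : E -> V;
  tgt : E -> V;
  fv  : V -> V;
  fe  : E -> seq (E * bool)     (* f(e) for positively oriented e *)
}.

Section GraphMaps.
Variables (V E : finType) (G : gmap V E).

Definition oedge := (E * bool)%type.
Definition oiota (o : oedge) : V := if o.2 then tgt G o.1 else src G o.1.
Definition otau  (o : oedge) : V := if o.2 then src G o.1 else tgt G o.1.
Definition orev (o : oedge) : oedge := (o.1, ~~ o.2).
Definition rev_path (p : seq oedge) : seq oedge := rev (map orev p).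

Definition is_edge_path (p : seq oedge) : bool :=
  (p != [::]) && sorted (fun o o' => otau o == oiota o') p.

(* f is a graph map: f(e) is an edge path from f(iota e) to f(tau e);
   f(\bar e) := reverse of f(e) is built into [fo]. *)
Definition is_graph_map : Prop :=
  forall e : E, [/\ is_edge_path (fe G e),
                    oiota (head (e, false) (fe G e)) = fv G (src G e)
                  & otau (last (e, false) (fe G e)) = fv G (tgt G e)].

(* f on oriented edges, on paths (concatenation, no tightening), powers *)
Definition fo (o : oedge) : seq oedge :=
  if o.2 then rev_path (fe G o.1) else fe G o.1.
Definition fpath (p : seq oedge) : seq oedge := flatten (map fo p).
Definition fiter (n : nat) (o : oedge) : seq oedge := iter n fpath [:: o].

Definition traverses (p : seq oedge) (e : E) : bool := has (fun o => o.1 == e) p.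

Definition Tmx (i j : E) : nat := count (fun o => o.1 == j) (fe G i).
Fixpoint Tpow (n : nat) (i j : E) : nat :=
  match n with
  | 0 => (i == j : nat)
  | n'.+1 => \sum_(k : E) Tpow n' i k * Tmx k j
  end.
Definition irreducible_matrix : Prop := forall i j : E, exists n, 0 < Tpow n i j.

Definition valence (v : V) : nat := #|[pred o : oedge | oiota o == v]|.

Definition irreducible : Prop :=
  irreducible_matrix /\ forall v : V, 3 <= valence v.

Definition expanding : Prop :=
  forall (e : E) (M : nat), exists N, forall n, N <= n -> M <= size (fiter n (e, false)).

Definition mixing (e : E) : bool := 1 < size (fe G e).
Definition surplus (e : E) : bool :=
  ~~ mixing e &&
  [exists u : E, (u != e) && ((fe G e == fe G u) || (fe G e == rev_path (fe G u)))].

Definition sstep (e e' : E) : bool :=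
  ~~ mixing e && ~~ surplus e && traverses (fe G e) e'.
Definition ssym (e e' : E) : bool := sstep e e' || sstep e' e.

Definition stack_of (e : E) : {set E} := [set e' | connect ssym e e'].
Definition stacks : {set {set E}} := [set stack_of e | e : E].

Definition final (e : E) : bool := mixing e || surplus e.
(* the final edge of a stack (unique in each stack) *)
Definition alpha (K : {set E}) : option E := [pick a in K | final a].
Definition omega (K : {set E}) : nat :=
  if alpha K is Some a then (size (fe G a)).-1 else 0.

Definition sg_edge (K K1 : {set E}) : bool :=
  if alpha K is Some a then has (fun o => o.1 \in K1) (fe G a) else false.
Definition is_slen (K K1 : {set E}) (s : nat) : Prop :=
  match alpha K, alpha K1 with
  | Some a, Some b =>
      0 < s /\ traverses (fiter s (a, false)) b /\
      forall s', 0 < s' < s -> ~~ traverses (fiter s' (a, false)) b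
  | _, _ => False
  end.

(* a directed path in the stack graph from K to K', listing each
   successive vertex with the length of the edge entering it *)
Fixpoint dpath (K : {set E}) (p : seq ({set E} * nat)) (K' : {set E}) : Prop :=
  match p with
  | [::] => K = K'
  | (K1, s) :: p' => [/\ K1 \in stacks, sg_edge K K1, is_slen K K1 s & dpath K1 p' K']
  end.

Definition in_ball (d : nat) (K K' : {set E}) : Prop :=
  exists p, dpath K p K' /\ sumn (map snd p) <= d.

Definition pbool (P : Prop) : bool := if excluded_middle_informative P then true else false.

Definition ball (d : nat) (K : {set E}) : {set {set E}} :=
  [set K' in stacks | pbool (in_ball d K K')].

End GraphMaps.

(* Main.v *)
Require Import Defs.
From mathcomp Require Import all_boot zify.
From Stdlib Require Import ClassicalEpsilon.
Set Implicit Arguments. Unset Strict Implicit. Unset Printing Implicit Defensive.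
Lemma sum_subset (T : finType) (A B : {set T}) (F : T -> nat) :
  A \subset B -> \sum_(i in A) F i <= \sum_(i in B) F i.
Proof.
move=> AB; rewrite [X in _ <= X](big_setID (A := B) A) /=.
by rewrite (setIidPr AB) leq_addr.
Qed.

Lemma sum_union (T : finType) (A B : {set T}) (F : T -> nat) :
  \sum_(i in A :|: B) F i <= \sum_(i in A) F i + \sum_(i in B) F i.
Proof.
rewrite (big_setID (A := A :|: B) A) /= setUK leq_add2l.
apply: sum_subset; apply/subsetP => x; rewrite !inE; by case: (x \in A).
Qed.

Lemma size_fpath (V E : finType) (G : gmap V E) s : is_graph_map G ->
  size (Defs.fpath G s) = size s + \sum_(o <- s) (size (fe G o.1)).-1.
Proof.
move=> Hg; elim: s => [|o s IH]; first by rewrite big_nil.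
rewrite big_cons.
have -> : Defs.fpath G (o :: s) = fo G o ++ Defs.fpath G s by [].
rewrite size_cat IH.
have -> : size (fo G o) = size (fe G o.1).
  by rewrite /fo; case: o.2; rewrite // /rev_path size_rev size_map.
have [Hp _ _] := Hg o.1.
have Hs : 0 < size (fe G o.1).
  by move: Hp; rewrite /is_edge_path; case: (fe G o.1).
rewrite -{1}(prednK Hs) /=; lia.
Qed.

Lemma sum_tr (E : finType) (F : E -> nat) (s : seq (E * bool)) :
  \sum_(b in [set b | traverses s b]) F b <= \sum_(o <- s) F o.1.
Proof.
elim: s => [|o s IH].
  by rewrite big_nil big1 // => b; rewrite inE.
rewrite big_cons.
have -> : [set b | traverses (o :: s) b] = [set o.1] :|: [set b | traverses s b].
  by apply/setP => b; rewrite !inE /traverses /= eq_sym.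
apply: leq_trans (sum_union _ _ _) _.
by rewrite big_set1 leq_add2l.
Qed.

Definition U (V E : finType) (G : gmap V E) (x : E * bool) n : {set E} :=
  [set b | has (fun k => traverses (fiter G k x) b) (iota 0 n)].

Lemma count_main (V E : finType) (G : gmap V E) x n : is_graph_map G ->
  1 + \sum_(b in U G x n) (size (fe G b)).-1 <= size (fiter G n x).
Proof.
move=> Hg; elim: n => [|n IH].
  by rewrite big1 // => b; rewrite inE.
have -> : U G x n.+1 = U G x n :|: [set b | traverses (fiter G n x) b].
  by apply/setP => b; rewrite !inE -addn1 iotaD has_cat /= orbF add0n.
have -> : fiter G n.+1 x = Defs.fpath G (fiter G n x) by [].
rewrite size_fpath //.
apply: leq_trans (_ : 1 + (\sum_(b in U G x n) (size (fe G b)).-1 +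
   \sum_(b in [set b | traverses (fiter G n x) b]) (size (fe G b)).-1) <= _).
  by rewrite leq_add2l sum_union.
rewrite addnA leq_add //.
exact: (sum_tr (fun b => (size (fe G b)).-1)).
Qed.
Lemma trav_fo (V E : finType) (G : gmap V E) o b :
  traverses (fo G o) b = traverses (fe G o.1) b.
Proof.
rewrite /fo; case: o.2 => //.
by rewrite /traverses /rev_path has_rev has_map.
Qed.

Lemma trav_fpath (V E : finType) (G : gmap V E) s b :
  traverses (Defs.fpath G s) b = has (fun o => traverses (fe G o.1) b) s.
Proof.
elim: s => //= o s IH.
have -> : Defs.fpath G (o :: s) = fo G o ++ Defs.fpath G s by [].
by rewrite /traverses has_cat -/(traverses _ _) -/(traverses _ _) trav_fo IH.
Qed.

Lemma fpath_mono (V E : finType) (G : gmap V E) p q :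
  (forall b, traverses p b -> traverses q b) ->
  forall b, traverses (Defs.fpath G p) b -> traverses (Defs.fpath G q) b.
Proof.
move=> H b; rewrite !trav_fpath => /hasP [o Ho Hb].
have : traverses p o.1 by apply/hasP; exists o.
move/H => /hasP [o' Ho' /eqP E1].
by apply/hasP; exists o'; rewrite // E1.
Qed.

Lemma iter_mono (V E : finType) (G : gmap V E) r p q :
  (forall b, traverses p b -> traverses q b) ->
  forall b, traverses (iter r (Defs.fpath G) p) b -> traverses (iter r (Defs.fpath G) q) b.
Proof.
move=> H; elim: r => //= r IH; exact: fpath_mono.
Qed.

Lemma dpath_trav (V E : finType) (G : gmap V E) p K0 K' a0 :
  alpha G K0 = Some a0 -> dpath G K0 p K' ->
  exists b, alpha G K' = Some b /\ traverses (fiter G (sumn (map snd p)) (a0, false)) b.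
Proof.
elim: p K0 a0 => [|[K1 s] p IH] K0 a0 HA /=.
  by move=> <-; exists a0; split => //; rewrite /traverses /= eqxx.
case=> _ _ Hs Hp; move: Hs; rewrite /is_slen HA.
case HB: (alpha G K1) => [b1|] // [_ [Ht _]].
have [b [Hb Htr]] := IH _ _ HB Hp.
exists b; split => //; rewrite /fiter addnC iterD.
apply: (iter_mono (p := [:: (b1, false)])) Htr.
by move=> c; rewrite /traverses /= orbF => /eqP <-.
Qed.

Lemma sstep_fun (V E : finType) (G : gmap V E) y w z :
  sstep G y w -> sstep G y z -> w = z.
Proof.
move=> /andP[/andP[Hm _] Hw] /andP[_ Hz]; move: Hm Hw Hz.
rewrite /mixing /traverses; case: (fe G y) => [|o [|o' l]] //= _.
by rewrite !orbF => /eqP <- /eqP <-.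
Qed.

Lemma final_nostep (V E : finType) (G : gmap V E) a w :
  final G a -> ~~ sstep G a w.
Proof. by rewrite /final /sstep; case: (mixing G a); case: (surplus G a). Qed.

Lemma inv_path (V E : finType) (G : gmap V E) a : final G a ->
  forall p y, connect (sstep G) y a -> path (ssym G) y p ->
  connect (sstep G) (last y p) a.
Proof.
move=> Hf; elim=> // z p IH y Hc /= /andP [Hyz Hp]; apply: IH Hp.
case/orP: Hyz => H.
  move/connectP: Hc => [[|w q] /=].
    by move=> _ Ea; move: H; rewrite -Ea; move/negP: (final_nostep z Hf).
  move=> /andP [Hyw Hq] Ha; have Ewz := sstep_fun Hyw H; subst w.
  by apply/connectP; exists q.
exact: connect_trans (connect1 H) Hc.
Qed.

Lemma final_uniq (V E : finType) (G : gmap V E) a b :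
  final G a -> final G b -> connect (ssym G) a b -> a = b.
Proof.
move=> Ha Hb /connectP [p Hp Eb].
have := inv_path Ha (connect0 _ a) Hp; rewrite -Eb.
move/connectP => [[|w q] /=]; first by move=> _ ->.
by move=> /andP [H _]; move/negP: (final_nostep w Hb).
Qed.

Lemma ssym_sym (V E : finType) (G : gmap V E) : symmetric (ssym G).
Proof. by move=> x y; rewrite /ssym orbC. Qed.

Lemma stack_eq (V E : finType) (G : gmap V E) K b :
  K \in stacks G -> b \in K -> K = stack_of G b.
Proof.
case/imsetP => e _ ->; rewrite inE => Heb.
have Hs := sym_connect_sym (ssym_sym G).
apply/setP => x; rewrite !inE; apply/idP/idP => H.
  by apply: connect_trans H; rewrite Hs.
exact: connect_trans Heb H.
Qed.

Lemma alpha_in (V E : finType) (G : gmap V E) K b :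
  alpha G K = Some b -> b \in K.
Proof. by rewrite /alpha; case: pickP => // x /andP [Hx _] [<-]. Qed.

Lemma alpha_final (V E : finType) (G : gmap V E) K a :
  K \in stacks G -> a \in K -> final G a -> alpha G K = Some a.
Proof.
move=> HK Ha Hf; rewrite /alpha; case: pickP => [b /andP [Hb Hfb] | H].
  congr Some; symmetry; apply: final_uniq Hf Hfb _.
  by move: Hb; rewrite (stack_eq HK Ha) inE.
by move: (H a); rewrite Ha Hf.
Qed.

Theorem lemma4p7 (V E : finType) (G : gmap V E) :
  is_graph_map G -> irreducible G -> expanding G ->
  forall (K : {set E}) (a : E),
    K \in stacks G -> a \in K -> final G a ->
    forall d : nat,
      1 + \sum_(K' in ball G d K) omega G K' <= size (fiter G d.+1 (a, false)).
Proof.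
move=> Hg _ _ K a HK Ha Hf d.
have HA := alpha_final HK Ha Hf.
pose h K' := odflt a (alpha G K').
have key : forall K', K' \in ball G d K ->
    exists b, alpha G K' = Some b /\ b \in U G (a, false) d.+1.
  move=> K'; rewrite inE => /andP [HK' Hb]; move: Hb; rewrite /pbool.
  case: excluded_middle_informative => // [[p [Hp Hs]]] _.
  have [b [Hb Ht]] := dpath_trav HA Hp.
  exists b; split => //; rewrite inE; apply/hasP; exists (sumn (map snd p)) => //.
  by rewrite mem_iota add0n ltnS.
have -> : \sum_(K' in ball G d K) omega G K' =
          \sum_(K' in ball G d K) (size (fe G (h K'))).-1.
  by apply: eq_bigr => K' HK'; have [b [Hb _]] := key _ HK'; rewrite /omega /h Hb.
rewrite -(big_imset (fun b => (size (fe G b)).-1)); last first.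
  move=> K1 K2 H1 H2; have [b1 [E1 _]] := key _ H1; have [b2 [E2 _]] := key _ H2.
  rewrite /h E1 E2 /= => Eb; subst b2.
  move: H1 H2; rewrite !inE => /andP [S1 _] /andP [S2 _].
  by rewrite (stack_eq S1 (alpha_in E1)) (stack_eq S2 (alpha_in E2)).
apply: leq_trans (count_main (a, false) d.+1 Hg).
rewrite leq_add2l; apply: sum_subset; apply/subsetP => b /imsetP [K' HK' ->].
by have [c [Hc Hu]] := key _ HK'; rewrite /h Hc.
Qed.
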